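(* Let $H$ be a finite abelian group of order $n$, and for $f:H\to\{0,1\}$ define the multispectrum $A_f:H^{n-1}\to\mathbb{Z}$ by $$A_f(\ell_1,\dots,\ell_{n-1})=\sum_{k\in H}f(k)f(k+\ell_1)\cdots f(k+\ell_1+\cdots+\ell_{n-1}).$$ If $f_1,f_2:H\to\{0,1\}$ satisfy $A_{f_1}=A_{f_2}$, then $f_1$ is a shift of $f_2$, i.e. there is $\ell\in H$ with $f_1(k)=f_2(k+\ell)$ for all $k\in H$. *)

(* Defs.v *)
From mathcomp Require Import all_boot all_algebra.
Set Implicit Arguments. Unset Strict Implicit. Unset Printing Implicit Defensive.
Import GRing.Theory.
Local Open Scope ring_scope.

(* A lag vector (l_1,...,l_{n-1}) is an element
   of {ffun 'I_(n-1) -> H} with n = #|H|; index j : 'I_(n-1) stands for l_{j+1}. *)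

Definition partial_lag (H : finZmodType) (m : nat) (l : {ffun 'I_m -> H}) (i : nat) : H :=
  \sum_(j < m | (j < i)%N) l j.

Definition multispectrum (H : finZmodType) (f : H -> bool)
    (l : {ffun 'I_(#|H|.-1) -> H}) : int :=
  \sum_(k : H) \prod_(i < #|H|) ((f (k + partial_lag l i) : nat)%:Z).

(* Main.v *)
Require Import Defs.
From mathcomp Require Import all_boot all_algebra.
Local Open Scope ring_scope.
Import GRing.Theory.

Section Aux.
Context {H : finZmodType}.

Definition cnt (f : H -> bool) (l : {ffun 'I_(#|H|.-1) -> H}) : nat :=
  #|[set k | [forall i : 'I_#|H|, f (k + partial_lag l i)]]|.

Lemma prod_bool (n : nat) (b : 'I_n -> bool) :
  \prod_(i < n) ((b i : nat)%:Z) = (([forall i, b i]) : nat)%:Z.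
Proof.
case: (boolP [forall i, b i]) => [/forallP Hb | /forallP Hb].
  by rewrite big1 // => i _; rewrite Hb.
have [i Hi] : exists i, ~~ b i.
  by apply/existsP; rewrite -negb_forall; apply/forallP.
by rewrite (bigD1 i) //= (negbTE Hi) mul0r.
Qed.

Lemma ms_cnt f l : multispectrum f l = (cnt f l)%:Z.
Proof.
rewrite /multispectrum /cnt.
under eq_bigr do rewrite prod_bool.
rewrite -(big_morph Posz PoszD (erefl _)); congr Posz.
rewrite (eq_bigr (fun k => (k \in [set k | [forall i : 'I_#|H|, f (k + partial_lag l i)]] : nat))); last first.
  by move=> k _; rewrite inE.
by rewrite -big_mkcond /= sum1_card.
Qed.

Lemma lag_exists (T : {set H}) (a : H) : a \in T ->
  exists l : {ffun 'I_(#|H|.-1) -> H}, exists c : H, forall f k,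
    [forall i : 'I_#|H|, f (k + partial_lag l i)] = [forall x in T, f (k + c + x)].
Proof.
move=> aT.
pose e := enum H.
pose t (i : nat) := let x := nth 0 e i in if x \in T then x else a.
exists [ffun j : 'I_(#|H|.-1) => t j.+1 - t j], (- t 0%N) => f k.
have ps : forall i : 'I_#|H|, partial_lag [ffun j : 'I_(#|H|.-1) => t j.+1 - t j] i = t i - t 0%N.
  move=> i; rewrite /partial_lag.
  have le : (i <= #|H|.-1)%N by rewrite -ltnS prednK ?ltn_ord // (leq_ltn_trans _ (ltn_ord i)).
  rewrite (eq_bigr (fun j : 'I_(#|H|.-1) => t j.+1 - t j)); last by move=> j _; rewrite ffunE.
  rewrite -(big_ord_widen _ (fun j => t j.+1 - t j) le).
  by rewrite -(big_mkord xpredT (fun j => t j.+1 - t j)) telescope_sumr.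
have tT : forall i, t i \in T by move=> i; rewrite /t; case: ifP.
apply/idP/idP => [/forallP Hf | /forall_inP Hf].
  apply/forall_inP => x xT.
  have xe : x \in e by rewrite mem_enum.
  have ilt : (index x e < #|H|)%N by rewrite cardE index_mem.
  have := Hf (Ordinal ilt); rewrite ps /=.
  have -> : t (index x e) = x by rewrite /t /= nth_index // xT.
  by rewrite [x - _]addrC addrA; apply.
apply/forallP => i; rewrite ps.
have := Hf _ (tT i).
by rewrite [t i - _]addrC addrA; apply.
Qed.

End Aux.

Theorem lemma7 (H : finZmodType) (f1 f2 : H -> bool) :
  (forall l : {ffun 'I_(#|H|.-1) -> H}, multispectrum f1 l = multispectrum f2 l) ->
  exists l : H, forall k : H, f1 k = f2 (k + l).
Proof.
move=> Hm.
have Hc : forall l, cnt f1 l = cnt f2 l.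
  by move=> l; apply/eqP; rewrite -eqz_nat -!ms_cnt Hm.
pose S1 := [set x | f1 x]; pose S2 := [set x | f2 x].
have incl : forall (f g : H -> bool), (forall l, cnt f l = cnt g l) ->
    forall a, g a -> exists c : H, forall x, g x -> f (x + c).
  move=> f g Hfg a ga.
  have aT : a \in [set x | g x] by rewrite inE.
  have [l [c Hl]] := @lag_exists _ _ _ aT.
  have : (0 < cnt g l)%N.
    apply/card_gt0P; exists (- c); rewrite inE Hl.
    by apply/forall_inP => x; rewrite inE addNr add0r.
  rewrite -Hfg => /card_gt0P [k]; rewrite inE Hl => /forall_inP Hk.
  exists (k + c) => x gx; rewrite addrC; apply: Hk; by rewrite inE.
case: (boolP [exists x, f2 x]) => [/existsP [a2 fa2] | Hn].
  have [c1 H1] := incl f1 f2 Hc a2 fa2.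
  have [a1 fa1] : exists a1, f1 a1 by exists (a2 + c1); apply: H1.
  have [c2 H2] := incl f2 f1 (fun l => esym (Hc l)) a1 fa1.
  have le1 : (#|S2| <= #|S1|)%N.
    rewrite -(card_imset S2 (addIr c1)); apply: subset_leq_card.
    by apply/subsetP => y /imsetP [x]; rewrite inE => /H1 fx ->; rewrite inE.
  have le2 : (#|S1| <= #|S2|)%N.
    rewrite -(card_imset S1 (addIr c2)); apply: subset_leq_card.
    by apply/subsetP => y /imsetP [x]; rewrite inE => /H2 fx ->; rewrite inE.
  have EQ : [set x + c1 | x in S2] = S1.
    apply/eqP; rewrite eqEcard card_imset ?le2; last exact: addIr.
    by rewrite andbT; apply/subsetP => y /imsetP [x]; rewrite inE => /H1 fx ->; rewrite inE.
  exists (- c1) => k.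
  have -> : f1 k = (k \in S1) by rewrite inE.
  rewrite -EQ; apply/imsetP/idP.
    by move=> [x]; rewrite inE => fx ->; rewrite addrK.
  by move=> fk; exists (k - c1); rewrite ?inE // subrK.
exists 0 => k; rewrite addr0.
have nf2 : forall x, f2 x = false.
  by move=> x; apply/negP => fx; move/negP: Hn; apply; apply/existsP; exists x.
rewrite nf2; apply/negP => fk.
have [c Hc'] := incl f2 f1 (fun l => esym (Hc l)) k fk.
by have := Hc' k fk; rewrite nf2.
Qed.
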